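(* Let $ABC$ be a nondegenerate triangle whose circumcenter $O$ does not lie on any of the lines $BC$, $CA$, $AB$ (i.e. $ABC$ is not right-angled). If $XYZ$ is a Miquel triangle of $P=O$ relative to $ABC$, then $O$ is the orthocenter of triangle $XYZ$.
   Context: Miquel triangle: given a triangle $ABC$ and a point $P$ not on the lines $BC,CA,AB$, a triangle $XYZ$ with $X$ on line $BC$, $Y$ on line $CA$, $Z$ on line $AB$ is called a Miquel triangle of $P$ relative to $ABC$ if $P$ lies on each of the three circles through $A,Y,Z$, through $B,Z,X$, and through $C,X,Y$. *)

(* Defs.v *)
From HB Require Import structures.
From mathcomp Require Import all_boot all_order all_algebra.
Set Implicit Arguments. Unset Strict Implicit. Unset Printing Implicit Defensive.
Import Order.TTheory GRing.Theory Num.Theory.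
Local Open Scope ring_scope.

Definition point (R : realFieldType) := (R * R)%type.

Definition dist2 (R : realFieldType) (P Q : point R) : R :=
  (P.1 - Q.1) ^+ 2 + (P.2 - Q.2) ^+ 2.

Definition collinear (R : realFieldType) (P Q S : point R) : Prop :=
  (Q.1 - P.1) * (S.2 - P.2) - (Q.2 - P.2) * (S.1 - P.1) = 0.

Definition on_line (R : realFieldType) (P Q X : point R) : Prop :=
  P <> Q /\ collinear P Q X.

Definition dotv (R : realFieldType) (P1 P2 Q1 Q2 : point R) : R :=
  (P1.1 - P2.1) * (Q1.1 - Q2.1) + (P1.2 - P2.2) * (Q1.2 - Q2.2).

Definition circumcenter (R : realFieldType) (A B C O : point R) : Prop :=
  dist2 O A = dist2 O B /\ dist2 O A = dist2 O C.

(* P lies on THE circle through U, V, W (which exists and is unique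
   exactly when U, V, W are not collinear) *)
Definition on_circle3 (R : realFieldType) (U V W P : point R) : Prop :=
  ~ collinear U V W /\
  exists c : point R,
    [/\ dist2 c U = dist2 c V, dist2 c U = dist2 c W & dist2 c U = dist2 c P].

Definition miquel_triangle (R : realFieldType) (A B C P X Y Z : point R) : Prop :=
  (on_line B C X /\ on_line C A Y /\ on_line A B Z) /\
  (on_circle3 A Y Z P /\ on_circle3 B Z X P /\ on_circle3 C X Y P).

Definition orthocenter (R : realFieldType) (X Y Z H : point R) : Prop :=
  [/\ ~ collinear X Y Z,
      dotv H X Y Z = 0, dotv H Y Z X = 0 & dotv H Z X Y = 0].

(* Main.v *)
Require Import Defs.
From HB Require Import structures.
From mathcomp Require Import all_boot all_order all_algebra.
From mathcomp Require Import ring lra.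
Import Order.TTheory GRing.Theory Num.Theory.
Local Open Scope ring_scope.

Section S.
Set Implicit Arguments.
Variable R : realFieldType.

Definition crs (P1 P2 Q1 Q2 : point R) : R :=
  (P1.1 - P2.1) * (Q1.2 - Q2.2) - (P1.2 - P2.2) * (Q1.1 - Q2.1).

Lemma sq2_neq0 (u1 u2 : R) : (u1 != 0) || (u2 != 0) -> u1 ^+ 2 + u2 ^+ 2 != 0.
Proof.
move=> h; apply/negP => /eqP /eqP; rewrite paddr_eq0 ?sqr_ge0 // !sqrf_eq0.
by case/andP=> /eqP h1 /eqP h2; move: h; rewrite h1 h2 eqxx.
Qed.

Lemma neq_pt (b1 b2 c1 c2 : R) : (b1, b2) <> (c1, c2) ->
  (c1 - b1) ^+ 2 + (c2 - b2) ^+ 2 != 0.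
Proof.
move=> hne; apply: sq2_neq0.
case: (eqVneq c1 b1) => [e1|h1]; last by rewrite subr_eq0 h1.
case: (eqVneq c2 b2) => [e2|h2]; last by rewrite !subr_eq0 h2 orbT.
by exfalso; apply: hne; rewrite e1 e2.
Qed.

Lemma param (B C X : point R) : on_line B C X ->
  exists t, X = (B.1 + t * (C.1 - B.1), B.2 + t * (C.2 - B.2)).
Proof.
case: B => b1 b2; case: C => c1 c2; case: X => x1 x2 [hne hcol].
rewrite /collinear /= in hcol.
have hu := neq_pt hne.
exists (((x1-b1)*(c1-b1)+(x2-b2)*(c2-b2)) / ((c1-b1)^+2+(c2-b2)^+2)) => /=.
congr pair.
  apply/eqP; rewrite -subr_eq0; apply/eqP.
  have -> : x1 - (b1 + ((x1-b1)*(c1-b1)+(x2-b2)*(c2-b2)) / ((c1-b1)^+2+(c2-b2)^+2) * (c1 - b1))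
     = - (c2 - b2) * ((c1 - b1) * (x2 - b2) - (c2 - b2) * (x1 - b1)) / ((c1-b1)^+2+(c2-b2)^+2) by field.
  by rewrite hcol mulr0 mul0r.
apply/eqP; rewrite -subr_eq0; apply/eqP.
have -> : x2 - (b2 + ((x1-b1)*(c1-b1)+(x2-b2)*(c2-b2)) / ((c1-b1)^+2+(c2-b2)^+2) * (c2 - b2))
   = (c1 - b1) * ((c1 - b1) * (x2 - b2) - (c2 - b2) * (x1 - b1)) / ((c1-b1)^+2+(c2-b2)^+2) by field.
by rewrite hcol mulr0 mul0r.
Qed.


Lemma spiral (B C O X : point R) (k : R) :
  dist2 O B = dist2 O C -> on_line B C X ->
  dotv X O C B = k * crs X O C B ->
  X.1 = O.1 + ((B.1-O.1)+(C.1-O.1))/2 - k*((B.2-O.2)+(C.2-O.2))/2 /\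
  X.2 = O.2 + ((B.2-O.2)+(C.2-O.2))/2 + k*((B.1-O.1)+(C.1-O.1))/2.
Proof.
move=> hD hl hK; have [t eX] := param hl; case: hl => hne _.
move/eqP: hK; rewrite -subr_eq0 => /eqP hK.
move/eqP: hD; rewrite eq_sym -subr_eq0 => /eqP hD.
move: hK hD; rewrite {}eX.
case: B hne => b1 b2; case: C => c1 c2; case: O => o1 o2 hne hK hD /=.
have hu := neq_pt hne.
move: hK hD; set K := (_ - k * _); set D := dist2 _ _ - _ => hK hD.
split; apply/eqP; rewrite -subr_eq0; apply/eqP.
  have -> : b1 + t * (c1 - b1) - (o1 + (b1 - o1 + (c1 - o1)) / 2 - k * (b2 - o2 + (c2 - o2)) / 2)
    = (K * (c1 - b1) - D / 2 * ((c1 - b1) - k * (c2 - b2))) / ((c1-b1)^+2+(c2-b2)^+2)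
    by rewrite /K /D /dotv /crs /dist2 /=; field.
  by rewrite hK hD !mul0r subrr mul0r.
have -> : b2 + t * (c2 - b2) - (o2 + (b2 - o2 + (c2 - o2)) / 2 + k * (b1 - o1 + (c1 - o1)) / 2)
  = (K * (c2 - b2) - D / 2 * ((c2 - b2) + k * (c1 - b1))) / ((c1-b1)^+2+(c2-b2)^+2)
  by rewrite /K /D /dotv /crs /dist2 /=; field.
by rewrite hK hD !mul0r subrr mul0r.
Qed.


Lemma conc (A Y Z O : point R) : A <> O -> on_circle3 A Y Z O ->
  crs Y O A Y * dotv Z O A Z = crs Z O A Z * dotv Y O A Y.
Proof.
case: A => a1 a2; case: O => o1 o2 hne [_ [c [e1 e2 e3]]].
have ha := neq_pt hne.
apply/eqP; rewrite -subr_eq0; apply/eqP; apply: (mulfI ha); rewrite mulr0.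
set cy := (Y.1 - o1) * (a2 - o2) - (Y.2 - o2) * (a1 - o1).
set cz := (Z.1 - o1) * (a2 - o2) - (Z.2 - o2) * (a1 - o1).
set dz := (a1 - o1) * (Z.1 - o1) + (a2 - o2) * (Z.2 - o2).
set dy := (a1 - o1) * (Y.1 - o1) + (a2 - o2) * (Y.2 - o2).
have -> : ((o1 - a1) ^+ 2 + (o2 - a2) ^+ 2) *
  (crs Y (o1, o2) (a1, a2) Y * dotv Z (o1, o2) (a1, a2) Z -
   crs Z (o1, o2) (a1, a2) Z * dotv Y (o1, o2) (a1, a2) Y)
  = (dist2 c (a1, a2) - dist2 c (o1, o2)) * (cy * dz - cz * dy)
    - ((o1 - a1) ^+ 2 + (o2 - a2) ^+ 2) * (cy * (dist2 c Z - dist2 c (o1, o2))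
        - cz * (dist2 c Y - dist2 c (o1, o2))).
  by rewrite /cy /cz /dy /dz /crs /dotv /dist2 /=; ring.
rewrite -e1 -e2 e3 !subrr; ring.
Qed.


Lemma rel (U V W O P Q : point R) (t s : R) : V <> O ->
  P = (U.1 + t * (V.1 - U.1), U.2 + t * (V.2 - U.2)) ->
  Q = (V.1 + s * (W.1 - V.1), V.2 + s * (W.2 - V.2)) ->
  on_circle3 V P Q O ->
  crs P O V U * dotv Q O W V = crs Q O W V * dotv P O V U.
Proof.
move=> hne eP eQ hc; have := conc hne hc; case: hc => hnc _.
have ht : 1 - t != 0.
  apply/negP; rewrite subr_eq0 => /eqP ht; apply: hnc.
  by rewrite eP eQ -ht /collinear /=; ring.
have hs : - s != 0.
  apply/negP; rewrite oppr_eq0 => /eqP hs; apply: hnc.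
  by rewrite eP eQ hs /collinear /=; ring.
have -> : crs P O V P * dotv Q O V Q = ((1 - t) * (- s)) * (crs P O V U * dotv Q O W V)
  by rewrite eP eQ /crs /dotv /=; ring.
have -> : crs Q O V Q * dotv P O V P = ((1 - t) * (- s)) * (crs Q O W V * dotv P O V U)
  by rewrite eP eQ /crs /dotv /=; ring.
by apply: mulfI; rewrite mulf_neq0.
Qed.


Lemma neqO (A B O : point R) : ~ collinear A B O -> A <> O.
Proof. by move=> h e; apply: h; rewrite e /collinear; ring. Qed.

End S.

Theorem theorem5 (R : realFieldType) (A B C O X Y Z : point R) :
  ~ collinear A B C ->
  circumcenter A B C O ->
  ~ collinear B C O -> ~ collinear C A O -> ~ collinear A B O ->
  miquel_triangle A B C O X Y Z ->
  orthocenter X Y Z O.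
Proof.
move=> hABC [hOB hOC] hBCO hCAO hABO [[hX [hY hZ]] [cA [cB cC]]].
have [t eX] := param hX; have [s eY] := param hY; have [r eZ] := param hZ.
have hxnz : crs X O C B != 0.
  apply/negP => /eqP h; apply: hBCO; rewrite /collinear -h eX /crs /=; ring.
pose k := dotv X O C B / crs X O C B.
have hkX : dotv X O C B = k * crs X O C B by rewrite /k divfK.
have relC := @rel R B C A O X Y t s (neqO hCAO) eX eY cC.
have relB := @rel R A B C O Z X r t (neqO hBCO) eZ eX cB.
have hkY : dotv Y O A C = k * crs Y O A C.
  by apply: (mulfI hxnz); rewrite relC hkX; ring.
have hkZ : dotv Z O B A = k * crs Z O B A.
  by apply: (mulfI hxnz); rewrite -relB hkX; ring.
have [hx1 hx2] := @spiral R B C O X k (etrans (esym hOB) hOC) hX hkX.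
have [hy1 hy2] := @spiral R C A O Y k (esym hOC) hY hkY.
have [hz1 hz2] := @spiral R A B O Z k hOB hZ hkZ.
have hk : (1 + k ^+ 2) / 4 != 0.
  rewrite mulf_neq0 // ?invr_eq0; last by rewrite pnatr_eq0.
  by rewrite gt_eqF // ltr_wpDr ?sqr_ge0.
split.
- move=> h; apply: hABC; move: h; rewrite /collinear hx1 hx2 hy1 hy2 hz1 hz2 => h.
  by apply: (mulfI hk); rewrite mulr0 -h; field.
- have -> : dotv O X Y Z = (1 + k ^+ 2) / 4 * (dist2 O B - dist2 O C)
    by rewrite /dotv /dist2 hx1 hx2 hy1 hy2 hz1 hz2; field.
  by rewrite -hOB -hOC subrr mulr0.
- have -> : dotv O Y Z X = (1 + k ^+ 2) / 4 * (dist2 O C - dist2 O A)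
    by rewrite /dotv /dist2 hx1 hx2 hy1 hy2 hz1 hz2; field.
  by rewrite -hOC subrr mulr0.
- have -> : dotv O Z X Y = (1 + k ^+ 2) / 4 * (dist2 O A - dist2 O B)
    by rewrite /dotv /dist2 hx1 hx2 hy1 hy2 hz1 hz2; field.
  by rewrite -hOB subrr mulr0.
Qed.
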